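(* Let $\Delta\subset\mathbb{R}^n_{\ge0}$ be a Newton polyhedron with a loose edge $E$ with endpoints $a=(a_1,\dots,a_n)$ and $b=(b_1,\dots,b_n)$. If $\min(a_1,b_1)=\dots=\min(a_n,b_n)=0$, then $a$ and $b$ are the only vertices of $\Delta$.
   Context: A Newton polyhedron is the convex hull of $S+\mathbb{R}^n_{\ge0}$ for a nonempty finite set $S\subset\mathbb{Z}^n_{\ge0}$. For $\xi\in\mathbb{R}^n_{\ge0}$, the face $\Delta^\xi=\{a\in\Delta:\langle\xi,a\rangle=\min_{b\in\Delta}\langle\xi,b\rangle\}$; it is compact iff $\xi\in\mathbb{R}^n_{>0}$. Vertices and edges are faces of dimension 0 and 1; a loose edge is a compact edge not contained in any compact face of dimension $\ge2$. *)

(* Defs.v *)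
From mathcomp Require Import all_boot all_order all_algebra.
Set Implicit Arguments. Unset Strict Implicit. Unset Printing Implicit Defensive.
Import Order.TTheory GRing.Theory Num.Theory.
Local Open Scope ring_scope.

Section NewtonDefs.
Variables (R : realFieldType) (n : nat).
Notation pt := 'rV[R]_n.

Definition conv_hull (A : pt -> Prop) : pt -> Prop := fun x =>
  exists (m : nat) (p : 'I_m -> pt) (w : 'I_m -> R),
    (forall i, A (p i)) /\ (forall i, 0 <= w i) /\
    \sum_(i < m) w i = 1 /\ x = \sum_(i < m) w i *: p i.

(* S + R^n_{>=0}, for S a finite set of points of Z^n_{>=0} *)
Definition shifted (S : seq 'rV[nat]_n) : pt -> Prop := fun x =>
  exists2 s, s \in S & forall i, ((s 0 i)%:R : R) <= x 0 i.

Definition newton_polyhedron (S : seq 'rV[nat]_n) : pt -> Prop :=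
  conv_hull (shifted S).

Definition dotp (x y : pt) : R := \sum_(i < n) x 0 i * y 0 i.

Definition face_of (D : pt -> Prop) (xi : pt) : pt -> Prop := fun a =>
  D a /\ forall b, D b -> dotp xi a <= dotp xi b.

Definition is_face (D : pt -> Prop) (F : pt -> Prop) : Prop :=
  exists xi : pt, (forall i, 0 <= xi 0 i) /\ (forall x, F x <-> face_of D xi x).

(* compact = bounded (faces are closed subsets of R^n) *)
Definition bounded_set (F : pt -> Prop) : Prop :=
  exists M : R, forall x, F x -> forall i, `|x 0 i| <= M.

Definition is_compact_face (D F : pt -> Prop) : Prop :=
  is_face D F /\ bounded_set F.

(* F contains k+1 affinely independent points, i.e. dim aff(F) >= k *)
Definition affdim_ge (F : pt -> Prop) (k : nat) : Prop :=
  exists p : 'I_k.+1 -> pt, (forall i, F (p i)) /\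
    row_free (\matrix_(i < k) (p (lift ord0 i) - p ord0)).

Definition affdim_eq (F : pt -> Prop) (k : nat) : Prop :=
  affdim_ge F k /\ ~ affdim_ge F k.+1.

Definition is_vertex (D : pt -> Prop) (v : pt) : Prop :=
  exists F, is_face D F /\ affdim_eq F 0 /\ F v.

Definition is_edge (D F : pt -> Prop) : Prop := is_face D F /\ affdim_eq F 1.

Definition is_loose_edge (D E : pt -> Prop) : Prop :=
  is_edge D E /\ bounded_set E /\
  forall G, is_compact_face D G -> affdim_ge G 2 -> ~ (forall x, E x -> G x).

Definition has_endpoints (E : pt -> Prop) (a b : pt) : Prop :=
  a != b /\
  forall x, E x <-> exists2 t : R, 0 <= t <= 1 & x = (1 - t) *: a + t *: b.

End NewtonDefs.

(* Main.v *)
Require Import Defs.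
From mathcomp Require Import all_boot all_order all_algebra.
From mathcomp Require Import lra.
Set Implicit Arguments. Unset Strict Implicit. Unset Printing Implicit Defensive.
Import Order.TTheory GRing.Theory Num.Theory.
Local Open Scope ring_scope.

Section Aux.
Variables (R : realFieldType) (n : nat).
Notation pt := 'rV[R]_n.

Definition sR (s : 'rV[nat]_n) : pt := \row_i ((s 0 i)%:R : R).
Definition posv (x : pt) := forall i, 0 <= x 0 i.

Lemma dotpDr (xi x y : pt) : dotp xi (x + y) = dotp xi x + dotp xi y.
Proof. rewrite /dotp -big_split /=; apply: eq_bigr => i _; by rewrite !mxE mulrDr. Qed.
Lemma dotpZr (xi x : pt) c : dotp xi (c *: x) = c * dotp xi x.
Proof. rewrite /dotp mulr_sumr; apply: eq_bigr => i _; by rewrite !mxE mulrCA. Qed.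
Lemma dotpNr (xi x : pt) : dotp xi (- x) = - dotp xi x.
Proof. rewrite /dotp -sumrN; apply: eq_bigr => i _; by rewrite !mxE mulrN. Qed.
Lemma dotpBr (xi x y : pt) : dotp xi (x - y) = dotp xi x - dotp xi y.
Proof. by rewrite dotpDr dotpNr. Qed.
Lemma dotpDl (xi eta x : pt) : dotp (xi + eta) x = dotp xi x + dotp eta x.
Proof. rewrite /dotp -big_split /=; apply: eq_bigr => i _; by rewrite !mxE mulrDl. Qed.
Lemma dotpZl (xi x : pt) c : dotp (c *: xi) x = c * dotp xi x.
Proof. rewrite /dotp mulr_sumr; apply: eq_bigr => i _; by rewrite !mxE mulrA. Qed.
Lemma dotp_sumr m (xi : pt) (w : 'I_m -> R) (p : 'I_m -> pt) :
  dotp xi (\sum_(k < m) w k *: p k) = \sum_(k < m) w k * dotp xi (p k).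
Proof.
rewrite /dotp. under eq_bigr => i _ do rewrite summxE mulr_sumr.
rewrite exchange_big /=; apply: eq_bigr => k _; rewrite mulr_sumr.
by apply: eq_bigr => i _; rewrite !mxE mulrCA.
Qed.
Lemma dotp_seg (xi a b : pt) t :
  dotp xi ((1 - t) *: a + t *: b) = (1 - t) * dotp xi a + t * dotp xi b.
Proof. by rewrite dotpDr !dotpZr. Qed.

Lemma dotp_mono (xi x y : pt) : posv xi -> (forall i, x 0 i <= y 0 i) ->
  dotp xi x <= dotp xi y.
Proof. move=> hxi hxy; apply: ler_sum => i _; exact: ler_wpM2l. Qed.
Lemma dotp_ge0 (xi x : pt) : posv xi -> posv x -> 0 <= dotp xi x.
Proof. move=> h1 h2; apply: sumr_ge0 => i _; exact: mulr_ge0. Qed.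
Lemma dotp_eq0 (xi r : pt) : (forall i, 0 < xi 0 i) -> posv r -> dotp xi r = 0 -> r = 0.
Proof.
move=> h1 h2 /eqP; rewrite psumr_eq0; last by move=> i _; apply: mulr_ge0 => //; exact: ltW.
move/allP => h; apply/rowP => i; rewrite mxE.
have := h i (mem_index_enum i); rewrite mulf_eq0 => /orP [|/eqP //].
by rewrite (gt_eqF (h1 i)).
Qed.

Variable S : seq 'rV[nat]_n.
Notation D := (newton_polyhedron S).

Lemma sR_ge0 s : posv (sR s).
Proof. by move=> i; rewrite mxE ler0n. Qed.

Lemma D_ge0 (y : pt) : D y -> posv y.
Proof.
case=> m [p [w [hp [hw [h1 ->]]]]] i; rewrite summxE; apply: sumr_ge0 => k _.
rewrite mxE; apply: mulr_ge0 => //; case: (hp k) => s _ /(_ i); apply: le_trans.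
by rewrite ler0n.
Qed.

Lemma D_sR s : s \in S -> D (sR s).
Proof.
move=> hs; exists 1%N, (fun _ => sR s), (fun _ => 1); split; first by move=> _; exists s => // i; rewrite mxE.
split=> //; split; first by rewrite big_ord1.
by rewrite big_ord1 scale1r.
Qed.

Lemma D_up (y x : pt) : D y -> (forall i, y 0 i <= x 0 i) -> D x.
Proof.
case=> m [p [w [hp [hw [h1 hy]]]]] hxy.
exists m, (fun k => p k + (x - y)), w; split.
  move=> k; case: (hp k) => s hs hsp; exists s => // i; apply: (le_trans (hsp i)).
  by rewrite !mxE lerDl subr_ge0.
split=> //; split=> //.
under eq_bigr => k _ do rewrite scalerDr.
by rewrite big_split /= -scaler_suml h1 scale1r -hy addrC subrK.
Qed.

Lemma D_lb (xi : pt) c (y : pt) : posv xi -> (forall s, s \in S -> c <= dotp xi (sR s)) ->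
  D y -> c <= dotp xi y.
Proof.
move=> hxi hc [m [p [w [hp [hw [h1 ->]]]]]].
rewrite dotp_sumr -[c]mul1r -h1 mulr_suml; apply: ler_sum => k _.
apply: ler_wpM2l => //.
case: (hp k) => s hs hsp; apply: (le_trans (hc s hs)); apply: dotp_mono => // i.
by rewrite mxE.
Qed.

End Aux.
Arguments sR {R n} s.
Arguments D_sR {R n S s} _.
Arguments sR_ge0 {R n} s _.

Section Aff.
Variables (R : realFieldType) (n : nat).
Notation pt := 'rV[R]_n.

Lemma affdim_single (v : pt) : affdim_eq (fun x => x = v) 0.
Proof.
split.
  exists (fun _ => v); split=> //.
  by rewrite /row_free; have := rank_leq_row (\matrix_(i < 0) (v - v)); rewrite leqn0.
case=> p [hp]; rewrite /row_free.
have -> : \matrix_(i < 1) (p (lift ord0 i) - p ord0) = 0.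
  by apply/matrixP => i j; rewrite !mxE !hp subrr.
by rewrite mxrank0.
Qed.

Lemma affdim0_uniq (F : pt -> Prop) x y : ~ affdim_ge F 1 -> F x -> F y -> x = y.
Proof.
move=> hF hx hy; apply/eqP/negP => /negP hxy; apply: hF.
exists (fun i : 'I_2 => if i == ord0 then x else y); split.
  by move=> i; case: (i == ord0).
rewrite /row_free rank_rV; set M := \matrix_(i < 1) _.
case: (eqVneq M 0) => [/matrixP h|//].
exfalso; move/eqP: hxy; apply; apply/rowP => k; have := h 0 k; rewrite !mxE /=.
by move/eqP; rewrite subr_eq0 => /eqP.
Qed.
End Aff.

Section Edge.
Variables (R : realFieldType) (n : nat) (S : seq 'rV[nat]_n).
Notation pt := 'rV[R]_n.
Notation D := (newton_polyhedron S).
Variables (E : pt -> Prop) (a b xi : pt).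
Hypothesis hxi0 : posv xi.
Hypothesis hE : forall x, E x <-> face_of D xi x.
Hypothesis hseg : forall x, E x <-> exists2 t : R, 0 <= t <= 1 & x = (1 - t) *: a + t *: b.
Hypothesis hab : a != b.
Hypothesis hbd : bounded_set E.
Hypothesis hmin : forall i, a 0 i * b 0 i = 0.

Lemma Ea : E a.
Proof. apply/hseg; exists 0; first by rewrite lexx ler01. by rewrite subr0 scale1r scale0r addr0. Qed.
Lemma Eb : E b.
Proof. apply/hseg; exists 1; first by rewrite lexx ler01. by rewrite subrr scale1r scale0r add0r. Qed.
Lemma ED x : E x -> D x.
Proof. by move/hE => []. Qed.
Lemma Eface x y : E x -> D y -> dotp xi x <= dotp xi y.
Proof. by move/hE => [_ h] /h. Qed.
Lemma dotp_ba : dotp xi b = dotp xi a.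
Proof. by apply/eqP; rewrite eq_le (Eface Eb (ED Ea)) (Eface Ea (ED Eb)). Qed.

Lemma xi_pos i : 0 < xi 0 i.
Proof.
rewrite lt_def hxi0 andbT; apply/negP => /eqP h0.
case: hbd => M0 hM.
pose c : R := `|M0| + 1.
pose y := a + c *: delta_mx 0 i.
have hc : 0 <= c by rewrite addr_ge0.
have hay : forall j, a 0 j <= y 0 j.
  by move=> j; rewrite !mxE lerDl mulr_ge0.
have Dy : D y := D_up (ED Ea) hay.
have hdy : dotp xi y = dotp xi a.
  rewrite dotpDr dotpZr; suff -> : dotp xi (delta_mx 0 i) = 0 by rewrite mulr0 addr0.
  apply: big1 => k _; rewrite mxE; case: (eqVneq i k) => [<-|/negPf hk]; first by rewrite h0 mul0r.
  by rewrite andbF mulr0.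
have Ey : E y by apply/hE; split=> // z Dz; rewrite hdy; exact: Eface Ea Dz.
have := hM _ Ey i; rewrite !mxE !eqxx /= mulr1.
have ha := D_ge0 (ED Ea) i.
rewrite ger0_norm ?addr_ge0 // => h.
have : `|M0| + 1 <= M0 by apply: le_trans h; rewrite lerDr.
by rewrite leNgt (le_lt_trans (ler_norm M0)) // ltrDl.
Qed.


Lemma dotp_w_a : dotp (\row_i (xi 0 i * b 0 i)) a = 0.
Proof. apply: big1 => i _; by rewrite mxE -mulrA (mulrC (b 0 i)) hmin mulr0. Qed.

Lemma dotp_w_b : 0 < dotp (\row_i (xi 0 i * b 0 i)) b.
Proof.
have hb := D_ge0 (ED Eb).
rewrite lt_def; apply/andP; split; last first.
  by apply: sumr_ge0 => i _; rewrite mxE !mulr_ge0.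
apply/negP => /eqP h; move/eqP: h; rewrite psumr_eq0; last by move=> i _; rewrite mxE !mulr_ge0.
move/allP => h.
have b0 : b = 0.
  apply/rowP => i; have := h i (mem_index_enum i); rewrite mxE !mxE.
  rewrite -mulrA mulf_eq0 (gt_eqF (xi_pos i)) /= mulf_eq0 orbb => /eqP //.
have a0 : a = 0.
  apply: (dotp_eq0 xi_pos (D_ge0 (ED Ea))).
  rewrite -dotp_ba b0; apply: big1 => i _; by rewrite mxE mulr0.
by move/eqP: hab; apply; rewrite a0 b0.
Qed.


Lemma vertex_a : is_vertex (newton_polyhedron S) a.
Proof.
pose w : pt := \row_i (xi 0 i * b 0 i).
have hw : posv w by move=> i; rewrite mxE mulr_ge0 // (D_ge0 (ED Eb)).
exists (fun x => x = a); split; last by split=> //; exact: affdim_single.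
exists (xi + w); split; first by move=> i; rewrite mxE addr_ge0.
move=> y; split.
  move=> ->; split; first exact: ED Ea.
  move=> z Dz; rewrite !dotpDl dotp_w_a; apply: lerD; first exact: Eface Ea Dz.
  exact: dotp_ge0 (D_ge0 Dz).
case=> Dy hy; have := hy a (ED Ea); rewrite !dotpDl dotp_w_a addr0 => h1.
have h2 := Eface Ea Dy.
have h3 : 0 <= dotp w y := dotp_ge0 hw (D_ge0 Dy).
have e1 : dotp xi y = dotp xi a.
  lra.
have e2 : dotp w y = 0.
  lra.
have Ey : E y by apply/hE; split=> // z Dz; rewrite e1; exact: Eface Ea Dz.
case/hseg: Ey => t _ yE.
move: e2; rewrite yE dotp_seg dotp_w_a mulr0 add0r => /eqP; rewrite mulf_eq0.
rewrite (gt_eqF dotp_w_b) orbF => /eqP t0.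
by rewrite t0 subr0 scale1r scale0r addr0.
Qed.

End Edge.


Lemma seq_argmin (R : realFieldType) (T : eqType) (l : seq T) (P : pred T) (f : T -> R) :
  (exists x, x \in l /\ P x) ->
  exists x, [/\ x \in l, P x & forall y, y \in l -> P y -> f x <= f y].
Proof.
elim: l => [[x [] //]|z l IH] [x [hx Px]].
case: (boolP (P z)) => Pz; last first.
  have [x0 [h1 h2 h3]] : exists x0, [/\ x0 \in l, P x0 & forall y, y \in l -> P y -> f x0 <= f y].
    apply: IH; exists x; split=> //; move: hx; rewrite inE => /orP [/eqP ex|//].
    by move: Pz; rewrite -ex Px.
  exists x0; split=> //; first by rewrite inE h1 orbT.
  by move=> y; rewrite inE => /orP [/eqP ->|]; [rewrite (negPf Pz)| exact: h3].
case: (boolP (has P l)) => hl.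
  have [x0 [h1 h2 h3]] : exists x0, [/\ x0 \in l, P x0 & forall y, y \in l -> P y -> f x0 <= f y].
    by apply: IH; case/hasP: hl => y hy Py; exists y.
  case: (lerP (f z) (f x0)) => hz.
    exists z; split=> //; first by rewrite inE eqxx.
    move=> y; rewrite inE => /orP [/eqP -> //|hy Py]; exact: le_trans hz (h3 y hy Py).
  exists x0; split=> //; first by rewrite inE h1 orbT.
  move=> y; rewrite inE => /orP [/eqP -> _|hy Py]; [exact: ltW | exact: h3].
exists z; split=> //; first by rewrite inE eqxx.
move=> y; rewrite inE => /orP [/eqP -> //|hy Py].
by move/hasPn: hl => /(_ y hy); rewrite Py.
Qed.

Lemma le_sum_term (R : realFieldType) m (F : 'I_m -> R) i :
  (forall k, 0 <= F k) -> F i <= \sum_k F k.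
Proof.
move=> h; rewrite (bigD1 i) //= lerDl; apply: sumr_ge0 => k _; exact: h.
Qed.

Section Ind.
Variables (R : realFieldType) (n : nat).
Lemma dotp_ind (c1 c2 : R) (i0 j0 : 'I_n) (x : 'rV[R]_n) :
  dotp (\row_k (c1 * (k == i0)%:R + c2 * (k == j0)%:R)) x = c1 * x 0 i0 + c2 * x 0 j0.
Proof.
rewrite /dotp. under eq_bigr => k _ do rewrite mxE mulrDl.
rewrite big_split /= (bigD1 i0) //= (bigD1 j0 (P := predT)) //= !eqxx !mulr1.
rewrite !big1 ?addr0 //; first by move=> k /negPf ->; rewrite mulr0 mul0r.
by move=> k /negPf ->; rewrite mulr0 mul0r.
Qed.
End Ind.

Section Loose.
Variables (R : realFieldType) (n : nat) (S : seq 'rV[nat]_n).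
Notation pt := 'rV[R]_n.
Notation D := (newton_polyhedron S).
Variables (E : pt -> Prop) (a b xi : pt).
Hypothesis hxi0 : posv xi.
Hypothesis hE : forall x, E x <-> face_of D xi x.
Hypothesis hseg : forall x, E x <-> exists2 t : R, 0 <= t <= 1 & x = (1 - t) *: a + t *: b.
Hypothesis hab : a != b.
Hypothesis hbd : bounded_set E.
Hypothesis hmin : forall i, a 0 i * b 0 i = 0.
Hypothesis hloose : forall G, is_compact_face D G -> affdim_ge G 2 -> ~ (forall x, E x -> G x).

Lemma loose_contra (i0 j0 : 'I_n) s : s \in S -> 0 < a 0 i0 -> 0 < b 0 j0 ->
  b 0 j0 * sR s 0 i0 + a 0 i0 * sR s 0 j0 < a 0 i0 * b 0 j0 -> False.
Proof.
move=> hs hai hbj hlt.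
have xipos := xi_pos hxi0 hE hseg hbd.
have Ea := Ea hseg; have Eb := Eb hseg.
have ED : forall x, E x -> D x := fun x => @ED _ _ _ _ _ hE x.
have Eface : forall x y, E x -> D y -> dotp xi x <= dotp xi y := fun x y => @Eface _ _ _ _ _ hE x y.
have aj0 : a 0 j0 = 0.
  by have /eqP := hmin j0; rewrite mulf_eq0 (gt_eqF hbj) orbF => /eqP.
have bi0 : b 0 i0 = 0.
  by have /eqP := hmin i0; rewrite mulf_eq0 (gt_eqF hai) /= => /eqP.
pose eta : pt := \row_k (b 0 j0 * (k == i0)%:R + a 0 i0 * (k == j0)%:R).
have heta : posv eta.
  by move=> k; rewrite mxE addr_ge0 // mulr_ge0 // ?ler0n // ltW.
pose P := a 0 i0 * b 0 j0.
have etaa : dotp eta a = P by rewrite dotp_ind aj0 mulr0 addr0 mulrC.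
have etab : dotp eta b = P by rewrite dotp_ind bi0 mulr0 add0r.
pose m := dotp xi a.
pose g x := dotp xi (sR x) - m.
pose h x := dotp eta (sR x) - P.
have hg x : x \in S -> 0 <= g x.
  by move=> hx; rewrite /g subr_ge0; apply: (Eface _ _ Ea (D_sR hx)).
have hg0 x : x \in S -> g x = 0 -> h x = 0.
  move=> hx /eqP; rewrite subr_eq0 => /eqP gx.
  have : E (sR x).
    apply/hE; split; first exact: D_sR.
    by move=> z Dz; rewrite gx; exact: Eface _ _ Ea Dz.
  rewrite /h; case/hseg => t _ ->; rewrite dotp_seg etaa etab; lra.
have hs0 : h s < 0.
  rewrite /h dotp_ind subr_lt0.
  by move: hlt; rewrite !mxE.
have [xs [xsS hxs xsmin]] := seq_argmin (fun x => g x / (- h x))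
   (ex_intro _ s (conj hs hs0) : exists x, x \in S /\ (fun x => h x < 0) x).
have hxs' : 0 < - h xs by rewrite oppr_gt0.
pose q := g xs / (- h xs).
have q0 : 0 <= q by rewrite divr_ge0 // ?(hg _ xsS) // ltW.
have qh : q * (- h xs) = g xs by rewrite /q divfK // gt_eqF.
pose xis := xi + q *: eta.
have xispos : forall i, 0 < xis 0 i.
  by move=> i; rewrite !mxE ltr_pwDl // mulr_ge0 //; have := heta i; rewrite mxE.
have xisp : posv xis by move=> i; exact: ltW.
pose M := m + q * P.
have dxis y : dotp xis y = dotp xi y + q * dotp eta y by rewrite dotpDl dotpZl.
have hall x : x \in S -> M <= dotp xis (sR x).
  move=> hx; rewrite dxis.
  have e1 : dotp xi (sR x) = g x + m by rewrite /g subrK.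
  have e2 : dotp eta (sR x) = h x + P by rewrite /h subrK.
  rewrite e1 e2 /M.
  have : 0 <= g x + q * h x.
    case: (ltrP (h x) 0) => hx0.
      have := xsmin x hx hx0; rewrite -/q -[X in q <= X]/(g x / (- h x)).
      rewrite ler_pdivlMr ?oppr_gt0 //; lra.
    by rewrite addr_ge0 ?(hg _ hx) // mulr_ge0.
  lra.
have hxsM : dotp xis (sR xs) = M.
  rewrite dxis /M.
  have e1 : dotp xi (sR xs) = g xs + m by rewrite /g subrK.
  have e2 : dotp eta (sR xs) = h xs + P by rewrite /h subrK.
  rewrite e1 e2; lra.
have haM : dotp xis a = M by rewrite dxis etaa.
have hbM : dotp xis b = M by rewrite dxis etab (dotp_ba hE hseg).
have hDlb y : D y -> M <= dotp xis y := D_lb xisp hall.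
pose G := face_of D xis.
have GM y : D y -> dotp xis y = M -> G y.
  by move=> Dy hy; split=> // z Dz; rewrite hy; exact: hDlb.
have gxs0 : g xs != 0.
  by apply/eqP => /(hg0 _ xsS) hh; move: hxs; rewrite hh ltxx.
apply: (hloose (G := G)).
- split.
    by exists xis; split.
  exists (\sum_k M / xis 0 k) => y [Dy hy] i.
  have y0 := D_ge0 Dy.
  have M0 : 0 <= M by rewrite -haM; apply: dotp_ge0 => //; exact: D_ge0 (ED _ Ea).
  rewrite ger0_norm //; apply: (le_trans _ (@le_sum_term _ _ (fun k => M / xis 0 k) i _)); last first.
    by move=> k; rewrite divr_ge0 // ltW.
  rewrite ler_pdivlMr // mulrC -haM; apply: le_trans (hy _ (ED _ Ea)).
  rewrite /dotp (bigD1 i) //= lerDl; apply: sumr_ge0 => k _; exact: mulr_ge0.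
- pose p (i : 'I_3) : pt := match val i with 0%N => a | 1%N => b | _ => sR xs end.
  exists p; split.
    case=> [[|[|[|k]]] hk] /=.
    + by apply: GM => //; exact: ED _ Ea.
    + by apply: GM => //; exact: ED _ Eb.
    + by apply: GM => //; exact: D_sR.
    + by [].
  apply: inj_row_free => v hv.
  have hv' : v 0 0 *: (b - a) + v 0 1 *: (sR xs - a) = 0.
    apply/rowP => k; move/rowP: hv => /(_ k); rewrite !mxE big_ord_recl big_ord1 !mxE.
    rewrite /p /=.
    have -> : lift ord0 ord0 = 1 :> 'I_2 by apply: val_inj.
    by have -> : ord0 = 0 :> 'I_2 by apply: val_inj.
  have := congr1 (dotp xi) hv'.
  rewrite dotpDr !dotpZr !dotpBr (dotp_ba hE hseg) subrr mulr0 add0r.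
  have -> : dotp xi 0 = 0 by rewrite /dotp big1 // => k _; rewrite mxE mulr0.
  move/eqP; rewrite mulf_eq0 -/m -/(g xs) (negPf gxs0) orbF => /eqP v1.
  move: hv'; rewrite v1 scale0r addr0 => /eqP; rewrite scaler_eq0 subr_eq0 (eq_sym b) (negPf hab) orbF.
  move=> /eqP v0; apply/rowP => i; rewrite mxE.
  by case: i => [[|[|]]] //= hi; [rewrite -v0 | rewrite -v1]; congr (v 0 _); apply: val_inj.
- move=> y /hseg [t ht ->]; apply: GM.
    by apply: ED; apply/hseg; exists t.
  by rewrite dotp_seg haM hbM; lra.
Qed.

Lemma key s : s \in S ->
  exists2 t : R, 0 <= t <= 1 & forall i, (1 - t) * a 0 i + t * b 0 i <= sR s 0 i.
Proof.
move=> hs.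
have Ea := Ea hseg; have Eb := Eb hseg.
have ha := D_ge0 (ED hE Ea); have hb := D_ge0 (ED hE Eb).
have hs0 := sR_ge0 s.
pose t := \big[Num.min/1]_(j | 0 < b 0 j) (sR s 0 j / b 0 j).
have t0 : 0 <= t.
  rewrite /t; apply: le_bigmin; first exact: ler01.
  move=> j hj; apply: divr_ge0; [exact: hs0 | exact: ltW].
have t1 : t <= 1 by apply: bigmin_le_id.
have tj j : 0 < b 0 j -> t <= sR s 0 j / b 0 j by move=> hj; apply: bigmin_le_cond.
have tcase : t = 1 \/ exists2 j, 0 < b 0 j & t = sR s 0 j / b 0 j.
  rewrite /t; apply: (big_ind (fun y => y = 1 \/ exists2 j, 0 < b 0 j & y = sR s 0 j / b 0 j)).
  - by left.
  - by move=> x y hx hy; case: (leP x y).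
  - by move=> j hj; right; exists j.
exists t; first by rewrite t0 t1.
move=> i; case: (ltrP 0 (b 0 i)) => hbi.
  have ai0 : a 0 i = 0.
    by have /eqP := hmin i; rewrite mulf_eq0 (gt_eqF hbi) orbF => /eqP.
  by rewrite ai0 mulr0 add0r -ler_pdivlMr //; exact: tj.
have bi0 : b 0 i = 0 by apply/eqP; rewrite eq_le hbi (hb i).
rewrite bi0 mulr0 addr0.
case: tcase => [->|[j hbj tE]]; first by rewrite subrr mul0r; exact: hs0.
case: (lerP ((1 - t) * a 0 i) (sR s 0 i)) => // hlt; exfalso.
have hai : 0 < a 0 i.
  rewrite lt_def ha andbT; apply/eqP => h0; move: hlt; rewrite h0 mulr0.
  by rewrite ltNge hs0.
apply: (loose_contra (i0 := i) (j0 := j) hs hai hbj).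
have sj : sR s 0 j = t * b 0 j by rewrite tE divfK // gt_eqF.
rewrite sj; rewrite -(ltr_pM2l hbj) in hlt; nra.
Qed.

End Loose.
Unset Implicit Arguments.

Theorem lemma2p2 (R : realFieldType) (n : nat) (S : seq 'rV[nat]_n)
    (E : 'rV[R]_n -> Prop) (a b : 'rV[R]_n) :
  (0 < size S)%N ->
  is_loose_edge (@newton_polyhedron R n S) E ->
  has_endpoints E a b ->
  (forall i : 'I_n, Num.min (a 0 i) (b 0 i) = 0) ->
  forall v : 'rV[R]_n, is_vertex (@newton_polyhedron R n S) v <-> (v = a \/ v = b).
Proof.
move=> _ [[[xi [hxi0 hE]] _] [hbd hloose]] [hab hseg] hmin0 v.
have hmin : forall i, a 0 i * b 0 i = 0.
  by move=> i; move: (hmin0 i); case: (leP (a 0 i) (b 0 i)) => _ ->; rewrite ?mul0r ?mulr0.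
have Ea := Ea hseg; have Eb := Eb hseg.
split.
  case=> F [[xi' [hxi' hF]] [[_ hF1] Fv]].
  have hv := proj1 (hF v) Fv.
  pose A := dotp xi' a; pose B := dotp xi' b.
  have key' : forall s, s \in S -> Num.min A B <= dotp xi' (sR s).
    move=> s hs; have [t /andP [t0 t1] ht] := key hxi0 hE hseg hab hbd hmin hloose hs.
    have hle : forall i, ((1 - t) *: a + t *: b) 0 i <= sR s 0 i.
      by move=> i; move: (ht i); rewrite !mxE.
    apply: le_trans (dotp_mono hxi' hle).
    rewrite dotp_seg -/A -/B; case: (leP A B) => hAB; nra.
  have lb : forall y, newton_polyhedron S y -> Num.min A B <= dotp xi' y.
    by move=> y; apply: D_lb.
  case: (leP A B) lb => hAB lb.
    left; apply: (affdim0_uniq hF1 Fv); apply/hF; split; first exact (ED hE Ea).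
    by move=> z Dz; apply: lb.
  right; apply: (affdim0_uniq hF1 Fv); apply/hF; split; first exact (ED hE Eb).
  by move=> z Dz; apply: lb.
case=> ->; first exact: (vertex_a hxi0 hE hseg hab hbd hmin).
have hseg' : forall x, E x <-> exists2 t : R, 0 <= t <= 1 & x = (1 - t) *: b + t *: a.
  move=> x; rewrite hseg; split; case=> t /andP [t0 t1] ->; exists (1 - t).
  - by apply/andP; split; lra.
  - by rewrite subKr addrC.
  - by apply/andP; split; lra.
  - by rewrite subKr addrC.
apply: (vertex_a hxi0 hE hseg' _ hbd); first by rewrite eq_sym.
by move=> i; rewrite mulrC.
Qed.
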